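(* Let $n\ge1$ and $d\ge2$ be integers, $\zeta$ a primitive $d$-th root of unity and $\zeta_*$ a primitive $12d$-th root of unity with $\zeta_*^{12}=\zeta$. For every $f\in\Psi^{\#}(Y,\pi)$, \[ \zeta_*^{nd(1-d^2)}\prod_{y\in Y}\zeta_*^{-6(f(y)^2+df(y))}=\zeta^{\sum_{i=1}^n\left(k_{i-1}(f)-f(i)\right)\left(\sum_{j=1}^{i}f(j)-\sum_{j=1}^{i-1}k_{j-1}(f)\right)}. \]
   Context: $Y=\{1,2,\dots,nd+1\}$ and $\pi\colon Y\to\mathbb{N}$ is given by $\pi(k)=n$ for $1\le k\le n+1$ and $\pi(k)=\lfloor\frac{k-n-2}{d-1}\rfloor$ for $n+2\le k\le nd+1$ (so $\pi^{-1}(n)=\{1,\dots,n+1\}$ and $\pi^{-1}(i)$ has $d-1$ elements for $0\le i\le n-1$). $\Psi(Y,\pi)$ is the set of maps $f\colon Y\to\{0,1,\dots,d-1\}$ that are strictly increasing on each $\pi^{-1}(i)$, $0\le i\le n$. For $f\in\Psi(Y,\pi)$ and $0\le i\le n-1$, $k_i(f)$ is the unique element of $\{0,\dots,d-1\}\setminus f(\pi^{-1}(i))$. $\Psi^{\#}(Y,\pi)=\{f\in\Psi(Y,\pi):\sum_{y\in Y}f(y)\equiv n\binom{d}{2}\pmod d\}$. *)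

(* Defs.v *)
From HB Require Import structures.
From mathcomp Require Import all_boot all_order all_algebra all_field.
Set Implicit Arguments. Unset Strict Implicit. Unset Printing Implicit Defensive.
Import Order.TTheory GRing.Theory Num.Theory.

(* Y = {1,...,nd+1} is encoded by the ordinals y : 'I_(n*d).+1, the ordinal y
   standing for the element y.+1 of Y.  A map f : Y -> {0,...,d-1} is a finite
   function {ffun 'I_(n*d).+1 -> 'I_d}. *)

Definition piY (n d k : nat) : nat :=
  if k <= n.+1 then n else (k - n - 2) %/ (d - 1).

Definition mapY (n d : nat) := {ffun 'I_(n * d).+1 -> 'I_d}.

Definition fval (n d : nat) (f : mapY n d) (k : nat) : nat :=
  f (inord k.-1).

Definition inPsi (n d : nat) (f : mapY n d) : bool :=
  [forall y1 : 'I_(n * d).+1, forall y2 : 'I_(n * d).+1,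
     ((piY n d y1.+1 == piY n d y2.+1) && (y1 < y2)) ==> (f y1 < f y2)].

Definition inPsiSharp (n d : nat) (f : mapY n d) : bool :=
  inPsi f &&
  ((\sum_(y : 'I_(n * d).+1) (f y : nat)) == n * 'C(d, 2) %[mod d]).

(* k_i(f): the (unique, for f in Psi) element of {0,..,d-1} not in f(pi^{-1}(i));
   default 0 if no such element exists. *)
Definition kf (n d : nat) (f : mapY n d) (i : nat) : nat :=
  oapp (@nat_of_ord d) 0%N
    [pick j : 'I_d | [forall y : 'I_(n * d).+1,
                        (piY n d y.+1 == i) ==> (f y != j)]].

(* Main.v *)
Require Import Defs.
From HB Require Import structures.
From mathcomp Require Import all_boot all_order all_algebra all_field.
From mathcomp Require Import ring lra zify.
Import Order.TTheory GRing.Theory Num.Theory.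
Local Open Scope ring_scope.

Lemma sq_id (a b : nat -> int) N :
  2 * (\sum_(1 <= i < N.+1) (b i - a i) *
        (\sum_(1 <= j < i.+1) a j - \sum_(1 <= j < i) b j))
  = \sum_(1 <= i < N.+1) (b i ^+ 2 - a i ^+ 2)
    - (\sum_(1 <= i < N.+1) a i - \sum_(1 <= i < N.+1) b i) ^+ 2.
Proof.
elim: N => [|N IH]; first by rewrite !big_geq.
rewrite !(big_nat_recr N.+1) //=.
rewrite mulrDr IH.
ring.
Qed.

Lemma sumsq (D : int) m :
  6 * (\sum_(v < m) ((v%:Z) ^+ 2 + D * v%:Z))
  = (m%:Z - 1) * m%:Z * (2 * m%:Z - 1) + 3 * D * m%:Z * (m%:Z - 1).
Proof.
elim: m => [|m IH]; first by rewrite big_ord0; ring.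
rewrite big_ord_recr /= mulrDr IH intS; ring.
Qed.

Lemma sum1 m : 2 * (\sum_(v < m) (v%:Z)) = m%:Z * (m%:Z - 1).
Proof.
elim: m => [|m IH]; first by rewrite big_ord0; ring.
rewrite big_ord_recr /= mulrDr IH intS; ring.
Qed.

Lemma prod_exprz (x : algC) (I : finType) (e : I -> int) : x != 0 ->
  \prod_(i : I) x ^ (e i) = x ^ (\sum_(i : I) e i).
Proof.
move=> x0; apply: (big_ind2 (fun a b => a = x ^ b)) => //.
by move=> ? ? ? ? -> ->; rewrite expfzDr.
Qed.

Lemma block_sum (d e : nat) (G : nat -> int) (h : 'I_e -> 'I_d) (k : 'I_d) :
  e.+1 = d -> injective h -> (forall t, h t != k) ->
  \sum_(t : 'I_e) G (h t) = \sum_(v : 'I_d) G v - G k.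
Proof.
move=> ed hinj hk.
rewrite (bigD1 k) //= addrC addrK.
transitivity (\sum_(t in [set: 'I_e]) G (h t)).
  by apply: eq_bigl => t; rewrite inE.
rewrite -(big_imset (fun v : 'I_d => G v)) /=; last first.
  by move=> x y _ _; apply: hinj.
apply: eq_bigl => v.
have sub : h @: [set: 'I_e] \subset [pred v | v != k].
  apply/subsetP => x /imsetP [t _ ->]; exact: hk.
have cE : #|h @: [set: 'I_e]| = #|[pred v | v != k]|.
  rewrite card_imset // cardsT card_ord.
  have := cardC1 k; rewrite card_ord => H.
  transitivity #|predC1 k|; last by apply: eq_card.
  by rewrite H -ed.
by rewrite ((subset_cardP cE) sub v).
Qed.

Lemma split_blocks (F : nat -> int) a e m :
  \sum_(a <= y < a + m * e) F y
  = \sum_(i < m) \sum_(a + i * e <= y < a + i * e + e) F y.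
Proof.
elim: m => [|m IH]; first by rewrite big_ord0 mul0n addn0 big_geq.
rewrite big_ord_recr /= -IH mulSnr addnA.
by rewrite (big_cat_nat _ (n := a + m * e)) //= ?leq_addr // -addnA leq_addr.
Qed.

Lemma shift_sum (F : nat -> int) b e :
  \sum_(b <= y < b + e) F y = \sum_(t < e) F (b + t)%N.
Proof.
elim: e => [|e IH]; first by rewrite big_ord0 addn0 big_geq.
by rewrite addnS big_nat_recr ?leq_addr //= IH big_ord_recr.
Qed.

Lemma fibre n d i (y : nat) : (2 <= d)%N -> (i < n)%N ->
  (piY n d y.+1 == i) = (n.+1 + i * (d - 1) <= y < n.+1 + i * (d - 1) + (d - 1))%N.
Proof.
move=> hd hi; rewrite /piY.
have e0 : (0 < d - 1)%N by lia.
case: ifP => H.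
  apply/idP/idP; first by move/eqP => E; lia.
  by move/andP => [H1 _]; lia.
rewrite eqn_leq leq_divRL // -ltnS ltn_divLR // mulSn.
have -> : (y.+1 - n - 2 = y - n.+1)%N by lia.
set k := (i * (d - 1))%N; set e := (d - 1)%N in e0 k *.
lia.
Qed.

Lemma bnd n d i t : (2 <= d)%N -> (i < n)%N -> (t < d - 1)%N ->
  (n.+1 + i * (d - 1) + t < (n * d).+1)%N.
Proof. move=> *; nia. Qed.

Lemma block_f n d (f : mapY n d) (G : nat -> int) (i : nat) :
  (2 <= d)%N -> (i < n)%N -> inPsi f ->
  \sum_(n.+1 + i * (d - 1) <= y < n.+1 + i * (d - 1) + (d - 1)) G (f (inord y))
  = \sum_(v : 'I_d) G v - G (kf f i).
Proof.
move=> hd hi hP.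
rewrite shift_sum.
set b := (n.+1 + i * (d - 1))%N.
have bb : forall t : 'I_(d - 1), (b + t < (n * d).+1)%N.
  by move=> t; apply: bnd.
pose h := fun t : 'I_(d - 1) => f (inord (b + t)).
have pih : forall t : 'I_(d - 1), piY n d (@inord (n * d) (b + t)).+1 == i.
  move=> t; rewrite inordK ?bb // fibre //; apply/andP; split; rewrite /b; move: (ltn_ord t) => ?; lia.
have hinj : injective h.
  move=> t1 t2 E; apply/eqP; apply: contraT => ne.
  move/forallP: hP => hP.
  have key : forall u1 u2 : 'I_(d - 1), (u1 < u2)%N -> h u1 != h u2.
    move=> u1 u2 lt; rewrite /h.
    have := hP (inord (b + u1)); move/forallP/(_ (inord (b + u2))).
    rewrite (eqP (pih u1)) (eqP (pih u2)) eqxx /= !inordK ?bb // ltn_add2l lt /=.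
    by move=> L; rewrite neq_ltn L.
  case: (ltngtP t1 t2) => L.
  - by have := key _ _ L; rewrite E eqxx.
  - by have := key _ _ L; rewrite E eqxx.
  - by case/negP: ne; apply/eqP/val_inj.
have : ~~ ([set: 'I_d] \subset h @: [set: 'I_(d - 1)]).
  apply/negP => S; have := subset_leq_card S.
  rewrite cardsT card_ord card_imset // cardsT card_ord; lia.
case/subsetPn => j _ jn.
have Pj : [forall y : 'I_(n * d).+1, (piY n d y.+1 == i) ==> (f y != j)].
  apply/forallP => y; apply/implyP; rewrite fibre // => /andP [L1 L2].
  have tl : (y - b < d - 1)%N by rewrite /b in L1 L2 *; lia.
  have -> : y = inord (b + Ordinal tl).
    have yl := ltn_ord y; apply: val_inj; rewrite /= inordK; rewrite /b in L1 L2 yl *; lia.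
  apply/negP => /eqP E. case/negP: jn. apply/imsetP. exists (Ordinal tl) => //.
rewrite /kf; case: pickP => [k Pk|]; last by move/(_ j); rewrite Pj.
rewrite /=; apply: (@block_sum d (d - 1) G h) => //.
  by rewrite subn1 prednK //; lia.
move=> t; move/forallP: Pk => /(_ (inord (b + t))).
by rewrite pih.
Qed.

Lemma decomp n d (f : mapY n d) (G : nat -> int) :
  (2 <= d)%N -> inPsi f ->
  \sum_(y : 'I_(n * d).+1) G (f y)
  = \sum_(1 <= j < n.+2) G (fval f j) + \sum_(i < n) (\sum_(v : 'I_d) G v - G (kf f i)).
Proof.
move=> hd hP.
transitivity (\sum_(0 <= y < (n * d).+1) G (f (inord y))).
  by rewrite big_mkord; apply: eq_bigr => y _; rewrite inord_val.
have E : ((n * d).+1 = n.+1 + n * (d - 1))%N by nia.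
rewrite (big_cat_nat _ (n := n.+1)) //= ?E ?leq_addr //.
congr (_ + _).
  by rewrite big_add1 /=; apply: eq_bigr.
have -> : index_iota n.+1 (n * d).+1 = index_iota n.+1 (n.+1 + n * (d - 1)) by rewrite E.
rewrite split_blocks; apply: eq_bigr => i _.
exact: block_f.
Qed.

Lemma even_prod (m : int) : exists r : int, 2 * r = m * (m - 1).
Proof.
have h0 := modz_ge0 m (isT : (2:int) != 0).
have h1 := ltz_pmod m (isT : (0:int) < 2).
have E := divz_eq m 2.
set q := (m %/ 2)%Z in E; set s := (m %% 2)%Z in E h0 h1.
have : s = 0 \/ s = 1 by lia.
case=> hs; rewrite hs in E; rewrite E.
  by exists (q * (2 * q - 1)); ring.
by exists (q * (2 * q + 1)); ring.
Qed.

Lemma final (n d A2 A1 c K1 K2 C1 S m r E : int) :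
  E = n * d * (1 - d ^+ 2) - 6 * (A2 + c ^+ 2) - 6 * d * (A1 + c)
      - n * ((d - 1) * d * (2 * d - 1) + 3 * d * d * (d - 1)) + 6 * (K2 + d * K1) ->
  2 * S = (K2 - A2) - (A1 - K1) ^+ 2 ->
  A1 + c - K1 = d * m -> 2 * C1 = d * (d - 1) -> 2 * r = m * (m - 1) ->
  E = 12 * S + 12 * d * (- n * C1 + d * r - m * c).
Proof.
move=> -> hS hA h1 h2.
have -> : 12 * S = 6 * (2 * S) by ring.
have -> : A1 = d * m - c + K1 by rewrite -hA; ring.
rewrite hS.
have -> : 12 * d * (- n * C1 + d * r - m * c)
  = 6 * n * d * (- (2 * C1)) + 6 * d * d * (2 * r) - 12 * d * m * c by ring.
rewrite h1 h2 (_ : A1 = d * m - c + K1) //; last by rewrite -hA; ring.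
ring.
Qed.

Theorem mainTheorem12 (n d : nat) (hn : (1 <= n)%N) (hd : (2 <= d)%N)
  (z zs : algC) (hz : d.-primitive_root z) (hzs : (12 * d)%N.-primitive_root zs)
  (hzz : zs ^+ 12 = z) (f : mapY n d) (hf : inPsiSharp f) :
  zs ^ ((n * d)%:Z * (1 - (d%:Z) ^+ 2)) *
    \prod_(y : 'I_(n * d).+1)
       zs ^ (- 6 * ((f y : nat)%:Z ^+ 2 + d%:Z * (f y : nat)%:Z))
  = z ^ (\sum_(1 <= i < n.+1)
           ((kf f i.-1)%:Z - (fval f i)%:Z) *
           (\sum_(1 <= j < i.+1) (fval f j)%:Z - \sum_(1 <= j < i) (kf f j.-1)%:Z)).
Proof.
move/andP: hf => [hP hC].
have zs0 : zs != 0.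
  apply/negP => /eqP z0; have := prim_expr_order hzs.
  rewrite z0 expr0n; have /negPf -> : (12 * d != 0)%N by lia.
  by move=> /esym/eqP; rewrite oner_eq0.
rewrite prod_exprz // -expfzDr // -hzz (exprnP zs 12) exprz_exp.
set S := \sum_(1 <= i < n.+1) _.
set A2 := \sum_(1 <= j < n.+1) (fval f j)%:Z ^+ 2.
set A1 := \sum_(1 <= j < n.+1) (fval f j)%:Z.
set c := (fval f n.+1)%:Z.
set K1 := \sum_(i < n) (kf f i)%:Z.
set K2 := \sum_(i < n) (kf f i)%:Z ^+ 2.
set C1 := \sum_(v < d) (v : nat)%:Z.
have hsum : \sum_(y : 'I_(n * d).+1) - 6 * ((f y : nat)%:Z ^+ 2 + d%:Z * (f y : nat)%:Z)
   = - 6 * (A2 + c ^+ 2) - 6 * d%:Z * (A1 + c)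
      - n%:Z * ((d%:Z - 1) * d%:Z * (2 * d%:Z - 1) + 3 * d%:Z * d%:Z * (d%:Z - 1))
      + 6 * (K2 + d%:Z * K1).
  have := @decomp n d f (fun v => - 6 * ((v%:Z) ^+ 2 + d%:Z * v%:Z)) hd hP.
  move=> /= ->.
  rewrite big_nat_recr //= sumrB sumr_const card_ord.
  have hv : \sum_(v < d) - 6 * ((v : nat)%:Z ^+ 2 + d%:Z * (v : nat)%:Z)
     = - ((d%:Z - 1) * d%:Z * (2 * d%:Z - 1) + 3 * d%:Z * d%:Z * (d%:Z - 1)).
    by rewrite -mulr_sumr mulNr sumsq.
  rewrite hv -!mulr_sumr !big_split /= -!mulr_sumr.
  rewrite -/A2 -/A1 -/c -/K1 -/K2 -mulr_natr natz.

  ring.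
have hS : 2 * S = (K2 - A2) - (A1 - K1) ^+ 2.
  rewrite /S sq_id.
  have sh : forall F : nat -> int, \sum_(1 <= i < n.+1) F i.-1 = \sum_(i < n) F i.
    by move=> F; rewrite big_add1 /= big_mkord.
  rewrite (sh (fun i => (kf f i)%:Z)) -/K1.
  rewrite sumrB (sh (fun i => (kf f i)%:Z ^+ 2)) -/K2 -/A2 -/A1.
  done.
have h1 : 2 * C1 = d%:Z * (d%:Z - 1) by rewrite /C1 sum1.
have hX : (\sum_(y : 'I_(n * d).+1) (f y : nat))%:Z = A1 + c + n%:Z * C1 - K1.
  rewrite (big_morph Posz PoszD (erefl 0%:Z)).
  have := @decomp n d f (fun v => v%:Z) hd hP; move=> /= ->.
  rewrite big_nat_recr //= sumrB sumr_const card_ord -/A1 -/c -/K1 -/C1.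
  rewrite -mulr_natr natz; ring.
have hC1 : C1 = 'C(d, 2)%:Z.
  rewrite -bin2_sum /C1 (big_morph Posz PoszD (erefl 0%:Z)) big_mkord.
  by [].
set X := (\sum_(y : 'I_(n * d).+1) (f y : nat))%N in hC hX.
have [m hm] : exists m : int, A1 + c - K1 = d%:Z * m.
  exists ((X %/ d)%N%:Z - ((n * 'C(d, 2)) %/ d)%N%:Z).
  have -> : A1 + c - K1 = X%:Z - (n * 'C(d, 2))%N%:Z by rewrite hX PoszM hC1; ring.
  rewrite {1}(divn_eq X d) {1}(divn_eq (n * 'C(d, 2)) d) (eqP hC) !PoszD !PoszM.
  ring.
have [r hr] := even_prod m.
have := @final n%:Z d%:Z A2 A1 c K1 K2 C1 S m r ((n * d)%N%:Z * (1 - d%:Z ^+ 2) +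
    \sum_(y : 'I_(n * d).+1) - 6 * ((f y : nat)%:Z ^+ 2 + d%:Z * (f y : nat)%:Z)) _ hS hm h1 hr.
move=> ->; last by rewrite hsum PoszM; ring.
rewrite expfzDr // mulrC.
have -> : 12 * d%:Z * (- n%:Z * C1 + d%:Z * r - m * c)
  = (12 * d)%N%:Z * (- n%:Z * C1 + d%:Z * r - m * c) by rewrite PoszM.
by rewrite -exprz_exp -exprnP prim_expr_order // exp1rz mul1r.
Qed.
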